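(* Let $c>0$. A countable collection of languages $\mathcal{L}$ is generable in the limit with set-based lower density $c$ under finite noise and finite omissions (i.e., there is a set-based generator which, for every $K\in\mathcal{L}$ and every enumeration of $K$ with finite noise and finite omissions, outputs sets $A_n$ with $A_n\subseteq K$ for all sufficiently large $n$ and $\liminf_{n}\mu_{\rm low}(A_n,K)\ge c$) if and only if for all $L,L'\in\mathcal{L}$ with $|L\setminus L'|<\infty$ it holds that $\mu_{\rm low}(L,L')\ge c$.
   Context: The universe is $U=\mathbb{N}$ with its natural order. A language is an infinite subset of $U$; a collection is a countable family of languages. For $A,B\subseteq\mathbb{N}$ with $B=\{b_1<b_2<\cdots\}$, $\mu_{\rm low}(A,B)=\liminf_n\frac1n|A\cap\{b_1,\dots,b_n\}|$. An enumeration is a sequence of distinct elements of $U$; $S_n=\{x_1,\dots,x_n\}$. An enumeration of $K$ with finite noise and finite omissions is a sequence in which every element of some $\hat K\subseteq K$ with $|K\setminus\hat K|<\infty$ appears exactly once and only finitely many elements outside $\hat K$ appear. A set-based generator is a sequence of maps that, given $x_1,\dots,x_n$ (and knowledge of $\mathcal{L}$, not of $K$), outputs $A_n\subseteq U\setminus S_n$. *)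

(* Defs.v *)
From HB Require Import structures.
From mathcomp Require Import all_boot all_order all_algebra.
From mathcomp Require Import boolp classical_sets functions cardinality reals ereal sequences.
Set Implicit Arguments. Unset Strict Implicit. Unset Printing Implicit Defensive.
Import Order.TTheory GRing.Theory Num.Theory.
Local Open Scope classical_set_scope.
Local Open Scope ring_scope.

Definition next_in (B : set nat) (m : nat) : nat :=
  xget 0%N [set x | B x /\ (m <= x)%N /\ forall y, B y -> (m <= y)%N -> (x <= y)%N].

(* Increasing enumeration of B: elem_of B 0 = b_1, elem_of B 1 = b_2, ... *)
Fixpoint elem_of (B : set nat) (k : nat) : nat :=
  match k with
  | 0 => next_in B 0
  | k'.+1 => next_in B (elem_of B k').+1
  end.

(* |A ∩ {b_1,...,b_n}| (the b_i are distinct for an infinite B). *)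
Definition cnt_first (A B : set nat) (n : nat) : nat :=
  \sum_(i < n) ((elem_of B i) \in A : nat).

(* mu_low(A,B) = liminf_n (1/n) |A ∩ {b_1..b_n}|, n >= 1, in the extended reals *)
Definition mu_low {R : realType} (A B : set nat) : \bar R :=
  limn_einf (fun n : nat => ((cnt_first A B n.+1)%:R / (n.+1)%:R : R)%:E).

Definition noisy_enum (K : set nat) (x : nat -> nat) : Prop :=
  injective x /\
  exists Khat : set nat, Khat `<=` K /\ finite_set (K `\` Khat) /\
    (forall y, Khat y -> exists i, x i = y) /\
    finite_set [set y | (exists i, x i = y) /\ ~ Khat y].

Definition prefix (x : nat -> nat) (n : nat) : seq nat := [seq x i | i <- iota 0 n].

(* a set-based generator: maps the observed prefix to A_n ⊆ U \ S_n *)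
Definition set_generator (G : seq nat -> set nat) : Prop :=
  forall s : seq nat, forall y, G s y -> y \notin s.

Definition generable_low_density_noisy (R : realType) (c : R)
    (Lc : set (set nat)) : Prop :=
  exists G : seq nat -> set nat, set_generator G /\
    forall K, Lc K -> forall x, noisy_enum K x ->
      (exists N, forall n, (N <= n)%N -> G (prefix x n) `<=` K) /\
      (c%:E <= limn_einf (fun n : nat => @mu_low R (G (prefix x n.+1)) K))%E.

(* Main.v *)
Require Import Defs.
From HB Require Import structures.
From mathcomp Require Import all_boot all_order all_algebra.
From mathcomp Require Import boolp classical_sets functions cardinality reals ereal sequences.
From mathcomp Require Import lra.
Import Order.TTheory GRing.Theory Num.Theory.
Local Open Scope classical_set_scope.
Local Open Scope ring_scope.

Set Implicit Arguments. Unset Strict Implicit. Unset Printing Implicit Defensive.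

Lemma ex_min_nat (P : nat -> Prop) : (exists n, P n) ->
  exists n, P n /\ forall k, P k -> (n <= k)%N.
Proof.
move=> [n Pn].
have ex : exists n, `[< P n >] by exists n; apply/asboolP.
case: (ex_minnP ex) => m /asboolP Pm Hm.
by exists m; split => // k Pk; apply: Hm; apply/asboolP.
Qed.

Lemma bounded_finite (F : set nat) m : (forall y, F y -> (y < m)%N) -> finite_set F.
Proof.
move=> H; apply: (@sub_finite_set _ _ `I_m); last exact: finite_II.
by move=> y /H.
Qed.

Lemma finite_bounded (F : set nat) : finite_set F -> exists m, forall y, F y -> (y < m)%N.
Proof.
move=> /finite_seqP[s ->]; exists (\max_(y <- s) y).+1 => y /= ys.
by rewrite ltnS; apply: leq_bigmax_seq.
Qed.

Lemma infinite_unbounded (B : set nat) : infinite_set B ->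
  forall m, exists y, B y /\ (m <= y)%N.
Proof.
move=> inf m; apply: contrapT => H; apply: inf; apply: (@bounded_finite _ m) => y By.
by rewrite ltnNge; apply/negP => my; apply: H; exists y.
Qed.

Section ElemOf.
Variable B : set nat.
Hypothesis infB : infinite_set B.

Lemma next_inP m : B (next_in B m) /\ (m <= next_in B m)%N /\
  forall y, B y -> (m <= y)%N -> (next_in B m <= y)%N.
Proof.
rewrite /next_in.
set P := [set x | B x /\ (m <= x)%N /\ forall y, B y -> (m <= y)%N -> (x <= y)%N].
suff : P (xget 0%N P) by []. apply: xgetPex.
have [y [By my]] := infinite_unbounded infB m.
have [n [[Bn mn] Hn]] := @ex_min_nat (fun n => B n /\ (m <= n)%N) (ex_intro _ y (conj By my)).
by exists n; split => //; split => // z Bz mz; apply: Hn.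
Qed.

Lemma elem_in i : B (elem_of B i).
Proof. by case: i => [|i]; apply: (proj1 (next_inP _)). Qed.

Lemma elem_S i : elem_of B i.+1 = next_in B (elem_of B i).+1.
Proof. by []. Qed.

Lemma elem_0 : elem_of B 0 = next_in B 0.
Proof. by []. Qed.

Lemma elem_lt i : (elem_of B i < elem_of B i.+1)%N.
Proof. by rewrite elem_S; case: (next_inP (elem_of B i).+1) => _ []. Qed.

Lemma elem_ge i : (i <= elem_of B i)%N.
Proof.
elim: i => [|i IH]; first exact: leq0n; apply: leq_ltn_trans IH _; exact: elem_lt.
Qed.

Lemma elem_mono i j : (i < j)%N -> (elem_of B i < elem_of B j)%N.
Proof.
elim: j => [|j IH] //; rewrite ltnS leq_eqVlt => /orP[/eqP ->|/IH h].
  exact: elem_lt.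
exact: ltn_trans h (elem_lt j).
Qed.

Lemma elem_inj : injective (elem_of B).
Proof.
move=> i j e; case: (ltngtP i j) => // /elem_mono; by rewrite e ltnn.
Qed.

Lemma elem_surj b : B b -> exists i, elem_of B i = b.
Proof.
move=> Bb.
suff H : forall i, (b <= elem_of B i)%N -> exists j, elem_of B j = b.
  by apply: (H b); exact: elem_ge.
elim=> [|i IH] hb.
  exists 0%N; apply/eqP; rewrite eqn_leq hb andbT elem_0.
  by case: (next_inP 0) => _ [_ H]; apply: H.
case: (leqP b (elem_of B i)) => [/IH //|lt].
exists i.+1; apply/eqP; rewrite eqn_leq hb andbT elem_S.
by case: (next_inP (elem_of B i).+1) => _ [_ H]; apply: H.
Qed.

End ElemOf.

Lemma sum_ltn_min n m : (\sum_(i < n) ((i < m)%N : nat) = minn n m)%N.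
Proof.
elim: n => [|n IH]; first by rewrite big_ord0 min0n.
rewrite big_ord_recr /= IH; case: (ltnP n m) => h.
  by rewrite (minn_idPl h) addn1.
by rewrite (minn_idPr (leqW h)) addn0.
Qed.

Lemma cnt_fin (A A' B : set nat) m n : infinite_set B ->
  (forall y, (m <= y)%N -> A y -> A' y) ->
  (cnt_first A B n <= cnt_first A' B n + m)%N.
Proof.
move=> infB H; rewrite /cnt_first.
apply: (@leq_trans (\sum_(i < n) (((elem_of B i) \in A' : nat) + ((i < m)%N : nat)))).
  apply: leq_sum => i _.
  case: (boolP (elem_of B i \in A)) => hA //.
  case: (leqP m (elem_of B i)) => hm.
    by rewrite (mem_set (H _ hm (set_mem hA))).
  by rewrite (leq_ltn_trans (elem_ge infB i) hm) addn1.
by rewrite big_split /= leq_add2l sum_ltn_min geq_minr.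
Qed.

Section Liminf.
Variable R : realType.
Local Open Scope ereal_scope.
Implicit Types u v : (\bar R)^nat.

Lemma limn_einf_supE u : limn_einf u = ereal_sup (range (einfs u)).
Proof. by rewrite limn_einf_lim; apply/cvg_lim => //; exact: cvg_einfs_sup. Qed.

Lemma limn_einf_ge u a : (exists N, forall n, (N <= n)%N -> a <= u n) ->
  a <= limn_einf u.
Proof.
move=> [N H]; rewrite limn_einf_supE.
apply: (@le_trans _ _ (einfs u N)); last by apply: ereal_sup_ubound; exists N.
by apply: le_ereal_inf_tmp => _ [n /= Nn <-]; exact: H.
Qed.

Lemma limn_einf_le u (b : \bar R) : (forall N, exists n, (N <= n)%N /\ u n <= b) ->
  limn_einf u <= b.
Proof.
move=> H; rewrite limn_einf_supE; apply: ge_ereal_sup => _ [N _ <-].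
have [n [Nn unv]] := H N; apply: le_trans unv.
by apply: ereal_inf_lbound; exists n.
Qed.

Lemma limn_einf_ev_le u v : (exists N, forall n, (N <= n)%N -> u n <= v n) ->
  limn_einf u <= limn_einf v.
Proof.
move=> [N H]; rewrite !limn_einf_supE; apply: ge_ereal_sup => _ [M _ <-].
apply: (@le_trans _ _ (einfs u (maxn M N))).
  by apply: nondecreasing_einfs; exact: leq_maxl.
apply: (@le_trans _ _ (einfs v (maxn M N))); last first.
  by apply: ereal_sup_ubound; exists (maxn M N).
apply: le_ereal_inf_tmp => _ [n /= Mn <-].
apply: le_trans (H n _); last exact: leq_trans (leq_maxr M N) Mn.
by apply: ereal_inf_lbound; exists n.
Qed.

End Liminf.

Lemma mu_low_fin (R : realType) (A A' B : set nat) m : infinite_set B ->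
  (forall y, (m <= y)%N -> A y -> A' y) -> (@mu_low R A B <= @mu_low R A' B)%E.
Proof.
move=> infB H; apply/lee_addgt0Pr => e e0.
rewrite /mu_low addeC -limn_einf_shift //.
apply: limn_einf_ev_le.
have e0' : (0 <= m%:R / e :> R) by rewrite divr_ge0 // ltW.
exists (Num.Def.archi_bound (m%:R / e)) => n Nn.
rewrite lee_fin.
have h1 := cnt_fin n.+1 infB H.
have h1' : ((cnt_first A B n.+1)%:R <= (cnt_first A' B n.+1)%:R + m%:R :> R).
  by rewrite -natrD ler_nat.
have h2 : (m%:R <= e * (n.+1)%:R :> R).
  have := archi_boundP e0'; rewrite -(ler_nat R) in Nn.
  move=> /lt_le_trans /(_ Nn) /ltW.
  have : ((n%:R : R) <= (n.+1)%:R) by rewrite ler_nat.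
  move=> h3 h4; have {h4} h4 := le_trans h4 h3.
  by rewrite ler_pdivrMr // mulrC in h4.
have k0 : (0 < (n.+1)%:R :> R) by rewrite ltr0n.
rewrite ler_pdivrMr // mulrDl divfK ?gt_eqF //.
lra.
Qed.

Local Notation dprefix := Defs.prefix.

Lemma prefix_size x n : size (dprefix x n) = n.
Proof. by rewrite /Defs.prefix size_map size_iota. Qed.

Lemma nth_prefix x n i : (i < n)%N -> nth 0%N (dprefix x n) i = x i.
Proof. by move=> h; rewrite /Defs.prefix (nth_map 0%N) ?size_iota // nth_iota. Qed.

Lemma take_prefix x n m : (m <= n)%N -> take m (dprefix x n) = dprefix x m.
Proof. by move=> h; rewrite /Defs.prefix -map_take take_iota (minn_idPl h). Qed.

Lemma notin_big (s : seq nat) y : (\max_(z <- s) z < y)%N -> y \notin s.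
Proof.
move=> h; apply/negP => ys.
have := @leq_bigmax_seq nat s xpredT (fun z => z) y ys isT.
by rewrite leqNgt h.
Qed.

Section Adversary.
Variables (G : seq nat -> set nat) (L L' : set nat).
Hypothesis infL : infinite_set L.
Hypothesis infL' : infinite_set L'.
Hypothesis finLL' : finite_set (L `\` L').
Hypothesis hGL : forall x, noisy_enum L x ->
  exists N, forall n, (N <= n)%N -> G (dprefix x n) `<=` L.

Definition P := L `&` L'.

Lemma infP : infinite_set P.
Proof.
move=> fP; apply: infL; apply: (@sub_finite_set _ _ (P `|` (L `\` L'))).
  by move=> y Ly; case: (pselect (L' y)) => h; [left|right].
by rewrite finite_setU.
Qed.

Definition minmiss (s : seq nat) := xget 0%N
  [set y | L' y /\ y \notin s /\ forall z, L' z -> z \notin s -> (y <= z)%N].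

Lemma minmissP s : L' (minmiss s) /\ minmiss s \notin s /\
  forall z, L' z -> z \notin s -> (minmiss s <= z)%N.
Proof.
rewrite /minmiss.
set Q := [set y | L' y /\ y \notin s /\ forall z, L' z -> z \notin s -> (y <= z)%N].
suff : Q (xget 0%N Q) by []. apply: xgetPex.
have [y [L'y yb]] := infinite_unbounded infL' (\max_(z <- s) z).+1.
have [n [[L'n ns] Hn]] := @ex_min_nat (fun n => L' n /\ n \notin s)
  (ex_intro _ y (conj L'y (notin_big yb))).
by exists n; split => //; split => // z L'z zs; apply: Hn.
Qed.

Definition Pc (s : seq nat) := [set y | P y /\ y \notin s].

Lemma infPc s : infinite_set (Pc s).
Proof.
have := infinite_setD infP (finite_seq s).
congr (~ finite_set _); apply/seteqP; split => y /=.
  by move=> [Py ys]; split => //; apply/negP.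
by move=> [Py /negP ys]; split.
Qed.

Arguments infPc : clear implicits.

Definition yseq (s : seq nat) (i : nat) :=
  if (i < size s)%N then nth 0%N s i else elem_of (Pc s) (i - size s).

Lemma yseq_inj s : uniq s -> injective (yseq s).
Proof.
move=> us i j; rewrite /yseq.
case: (ltnP i (size s)) => hi; case: (ltnP j (size s)) => hj.
- by move=> /eqP; rewrite nth_uniq // => /eqP.
- move=> e; have := elem_in (infPc s) (j - size s); rewrite -e /= => -[_].
  by rewrite mem_nth.
- move=> e; have := elem_in (infPc s) (i - size s); rewrite e /= => -[_].
  by rewrite mem_nth.
- move=> /(elem_inj (infPc s)) e.
  by rewrite -(subnK hi) -(subnK hj) e.
Qed.

Lemma yseq_range s i : (i < size s)%N /\ yseq s i \in s \/ Pc s (yseq s i).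
Proof.
rewrite /yseq; case: (ltnP i (size s)) => hi.
  by left; rewrite mem_nth.
by right; exact: elem_in (infPc s) _.
Qed.

Lemma noisy_y s : uniq s -> noisy_enum L (yseq s).
Proof.
move=> us; split; first exact: yseq_inj.
exists (Pc s); split; first by move=> y [[]].
split.
  apply: (@sub_finite_set _ _ ((L `\` L') `|` [set` s])); last first.
    by rewrite finite_setU; split.
  move=> y [Ly nPc]; case: (pselect (L' y)) => hy; [right|left] => //=.
  by apply: contrapT => ys; apply: nPc; split => //; apply/negP.
split.
  move=> y Py; have [i <-] := elem_surj (infPc s) Py.
  exists (size s + i)%N; rewrite /yseq ltnNge leq_addr /=.
  by rewrite addKn.
apply: (@sub_finite_set _ _ [set` s]) => // y [[i <-] nPc].
by case: (yseq_range s i) => [[]|].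
Qed.

Definition Nof (s : seq nat) := xget 0%N
  [set N | forall n, (N <= n)%N -> G (dprefix (yseq s) n) `<=` L].

Lemma NofP s : uniq s -> forall n, (Nof s <= n)%N -> G (dprefix (yseq s) n) `<=` L.
Proof.
move=> us; rewrite /Nof.
set Q := [set N | forall n, (N <= n)%N -> G (dprefix (yseq s) n) `<=` L].
suff : Q (xget 0%N Q) by []. apply: xgetPex.
exact: hGL (noisy_y us).
Qed.

Definition ext (s : seq nat) :=
  let s' := rcons s (minmiss s) in dprefix (yseq s') (maxn (Nof s') (size s')).

Lemma prefix_y s : dprefix (yseq s) (size s) = s.
Proof.
apply: (@eq_from_nth _ 0%N); rewrite prefix_size // => i hi.
by rewrite nth_prefix // /yseq hi.
Qed.

Section ExtProps.
Variable s : seq nat.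
Hypothesis us : uniq s.
Hypothesis sL' : forall y, y \in s -> L' y.
Let s' := rcons s (minmiss s).

Lemma us' : uniq s'.
Proof. by rewrite /s' rcons_uniq us andbT; case: (minmissP s) => _ []. Qed.

Lemma ext_take' : take (size s') (ext s) = s'.
Proof. by rewrite /ext -/s' take_prefix ?leq_maxr // prefix_y. Qed.

Lemma ext_take : take (size s) (ext s) = s.
Proof.
rewrite /ext -/s' take_prefix; last first.
  by rewrite (leq_trans _ (leq_maxr _ _)) // /s' size_rcons.
rewrite -(take_prefix (yseq s') (n := size s')); last by rewrite /s' size_rcons.
by rewrite prefix_y /s' -cats1 take_size_cat.
Qed.

Lemma ext_size : (size s < size (ext s))%N.
Proof. by rewrite /ext prefix_size (leq_trans _ (leq_maxr _ _)) // size_rcons. Qed.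

Lemma ext_uniq : uniq (ext s).
Proof. by rewrite /ext /Defs.prefix map_inj_uniq ?iota_uniq //; exact: yseq_inj us'. Qed.

Lemma ext_L' y : y \in ext s -> L' y.
Proof.
rewrite /ext -/s' /Defs.prefix => /mapP[i _ ->].
case: (yseq_range s' i) => [[_]|[[_ ?] _]] //.
rewrite /s' mem_rcons in_cons => /orP[/eqP ->|/sL'] //.
by case: (minmissP s).
Qed.

Lemma ext_min : minmiss s \in ext s.
Proof.
have : minmiss s \in take (size s') (ext s) by rewrite ext_take' /s' mem_rcons mem_head.
exact: mem_take.
Qed.

Lemma ext_G : G (ext s) `<=` L.
Proof. by rewrite /ext; apply: NofP us' _ _; exact: leq_maxl. Qed.

End ExtProps.

Fixpoint st (k : nat) : seq nat := if k is k'.+1 then ext (st k') else [::].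

Lemma st_inv k : [/\ uniq (st k), (forall y, y \in st k -> L' y), (k <= size (st k))%N
  & forall y, L' y -> (y < k)%N -> y \in st k].
Proof.
elim: k => [|k [u sub sz cov]] /=; first by split.
have tk : take (size (st k)) (ext (st k)) = st k by apply: ext_take.
split.
- exact: ext_uniq.
- by move=> y; apply: ext_L'.
- by apply: leq_ltn_trans sz _; apply: ext_size.
- move=> y L'y; rewrite ltnS leq_eqVlt => /orP[/eqP ey|/(cov _ L'y) ys]; last first.
    by apply: (mem_take (n0 := size (st k))); rewrite tk.
  subst y; case: (boolP (k \in st k)) => kin.
    by apply: (mem_take (n0 := size (st k))); rewrite tk.
  suff e : minmiss (st k) = k by rewrite -{1}e; exact: ext_min.
  case: (minmissP (st k)) => Lm [mn mmin].
  apply/eqP; rewrite eqn_leq (mmin k L'y kin) /= leqNgt; apply/negP => mk.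
  by rewrite (cov _ Lm mk) in mn.
Qed.

Lemma st_prefix k l : (k <= l)%N -> take (size (st k)) (st l) = st k.
Proof.
elim: l => [|l IH]; first by rewrite leqn0 => /eqP ->; rewrite take_size.
rewrite leq_eqVlt => /orP[/eqP ->|]; first by rewrite take_size.
rewrite ltnS => /IH h /=.
have [u sub sz _] := st_inv l.
have tl : take (size (st l)) (ext (st l)) = st l by apply: ext_take.
have le : (size (st k) <= size (st l))%N.
  by rewrite -{1}h size_take_min geq_minr.
by rewrite -[in RHS]h -[st l in RHS]tl take_takel.
Qed.

Lemma st_nth k l i : (i < size (st k))%N -> (i < size (st l))%N ->
  nth 0%N (st k) i = nth 0%N (st l) i.
Proof.
wlog kl : k l / (k <= l)%N.
  move=> H hk hl; case: (leqP k l) => h; first exact: H.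
  by symmetry; apply: H => //; exact: ltnW.
move=> hk _; by rewrite -(st_prefix kl) nth_take.
Qed.

Definition xadv (i : nat) := nth 0%N (st i.+1) i.

Lemma size_st_ge i : (i < size (st i.+1))%N.
Proof. by have [_ _ sz _] := st_inv i.+1. Qed.

Lemma prefix_xadv k : dprefix xadv (size (st k)) = st k.
Proof.
apply: (@eq_from_nth _ 0%N); rewrite prefix_size // => i hi.
by rewrite nth_prefix // /xadv (st_nth (size_st_ge i) hi).
Qed.

Lemma st_size_mono k l : (k <= l)%N -> (size (st k) <= size (st l))%N.
Proof. by move=> /st_prefix h; rewrite -{1}h size_take_min geq_minr. Qed.

Lemma xadv_in i : L' (xadv i).
Proof.
have [_ sub _ _] := st_inv i.+1; apply: sub; rewrite /xadv mem_nth //.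
exact: size_st_ge.
Qed.

Lemma xadv_noisy : noisy_enum L' xadv.
Proof.
split.
  move=> i j e.
  have hk : forall a, (a <= maxn i j)%N -> (a < size (st (maxn i j).+1))%N.
    move=> a ha; apply: leq_trans (size_st_ge a) _; exact: st_size_mono.
  have hi := hk i (leq_maxl i j); have hj := hk j (leq_maxr i j).
  move: e; rewrite /xadv (st_nth (size_st_ge i) hi) (st_nth (size_st_ge j) hj).
  have [u _ _ _] := st_inv (maxn i j).+1.
  by move=> /eqP; rewrite nth_uniq // => /eqP.
exists L'; split => //; split.
  by rewrite setDv; exact: finite_set0.
split.
  move=> y L'y; have [_ _ _ cov] := st_inv y.+1.
  have yin := cov y L'y (ltnSn y).
  exists (index y (st y.+1)); rewrite /xadv.
  have hs : (index y (st y.+1) < size (st y.+1))%N by rewrite index_mem.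
  by rewrite (st_nth (size_st_ge _) hs) nth_index.
apply: (@sub_finite_set _ _ set0); last exact: finite_set0.
by move=> y [[i <-]]; have := xadv_in i.
Qed.

Lemma xadv_often N : exists n, (N <= n)%N /\ G (dprefix xadv n.+1) `<=` L.
Proof.
have sz := size_st_ge N.
exists (size (st N.+1)).-1; split; first by rewrite -ltnS prednK // (leq_ltn_trans _ sz).
rewrite prednK; last exact: leq_ltn_trans _ sz.
rewrite prefix_xadv /=.
have [u sub _ _] := st_inv N.
exact: ext_G.
Qed.

End Adversary.

Definition aidx (j : nat) := logn 2 j.+1.

Lemma aidx_hit k T0 : exists z, aidx z = k /\ (T0 <= z)%N.
Proof.
have pos : (0 < 2 ^ k * T0.*2.+1)%N by rewrite muln_gt0 expn_gt0.
exists (2 ^ k * T0.*2.+1).-1; rewrite /aidx prednK //; split.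
  rewrite lognM ?expn_gt0 // pfactorK // logn_coprime ?addn0 //.
  by rewrite coprime2n /= odd_double.
rewrite -ltnS prednK //; apply: (@leq_trans T0.*2.+1).
  by rewrite ltnS -addnn leq_addr.
by rewrite leq_pmull // expn_gt0.
Qed.

Lemma exists_max (Q : nat -> Prop) z n : Q z -> (z <= n)%N ->
  exists p, [/\ (z <= p)%N, (p <= n)%N, Q p &
    forall p', (p' <= n)%N -> Q p' -> (p' <= p)%N].
Proof.
move=> Qz; elim: n => [|n IH].
  move=> hz; have ez : z = 0%N by case: z Qz hz.
  subst z; exists 0%N; split => // -[|p'] //.
rewrite leq_eqVlt => /orP[/eqP ez|].
  by subst z; exists n.+1; split.
rewrite ltnS => /IH.
move=> [p [zp pn Qp Hp]].
case: (pselect (Q n.+1)) => Qn1.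
  exists n.+1; split => //; first by apply: leq_trans zp (leq_trans pn _).
exists p; split => //; first exact: leq_trans pn _.
move=> p'; rewrite leq_eqVlt => /orP[/eqP -> //|].
by rewrite ltnS => h Qp'; exact: Hp.
Qed.

Section Generator.
Variable R : realType.
Variable c : R.
Variable Lc : set (set nat).
Variable f : nat -> set nat.
Hypothesis hf : forall i, Lc (f i).
Hypothesis hsurj : forall K, Lc K -> exists k, f k = K.
Hypothesis hlang : forall L, Lc L -> infinite_set L.
Hypothesis hcond : forall L L', Lc L -> Lc L' -> finite_set (L `\` L') ->
  (c%:E <= @mu_low R L L')%E.

Definition M (j : nat) := [set y | f (aidx j) y /\ (j <= y)%N].
Definition cons (s : seq nat) j := forall y, y \in s -> (j <= y)%N -> f (aidx j) y.
Definition crit s p := cons s p /\ forall q, (q < p)%N -> cons s q -> M p `<=` M q.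
Definition Pmax s p := [/\ (p <= size s)%N, crit s p &
  forall p', (p' <= size s)%N -> crit s p' -> (p' <= p)%N].
Definition Gen (s : seq nat) := [set y | exists p, Pmax s p /\ M p y /\ y \notin s].

Lemma Gen_gen : set_generator Gen.
Proof. by move=> s y [p [_ [_ ?]]]. Qed.

Lemma prefix_mono x n n' y : (n <= n')%N -> y \in dprefix x n -> y \in dprefix x n'.
Proof. by move=> h; rewrite -(take_prefix x h) => /mem_take. Qed.

Lemma Gen_ok K x : Lc K -> noisy_enum K x ->
  (exists N, forall n, (N <= n)%N -> Gen (dprefix x n) `<=` K) /\
  (c%:E <= limn_einf (fun n => @mu_low R (Gen (dprefix x n.+1)) K))%E.
Proof.
move=> LcK [xinj [Kh [KhK [finom [allapp finnoise]]]]].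
have [k fk] := hsurj LcK.
have [b1 hb1] := finite_bounded finom.
have [b2 hb2] := finite_bounded finnoise.
have [z [az zT]] := aidx_hit k (maxn b1 b2).
have b1z : (b1 <= z)%N by apply: leq_trans zT; exact: leq_maxl.
have b2z : (b2 <= z)%N by apply: leq_trans zT; exact: leq_maxr.
have consz : forall n, cons (dprefix x n) z.
  move=> n y /mapP[i _ ->] zy; rewrite az fk; apply: KhK.
  apply: contrapT => nK.
  have := hb2 (x i) (conj (ex_intro _ i erefl) nK).
  by rewrite ltnNge (leq_trans b2z zy).
have cons_mono : forall n n' q, (n <= n')%N -> cons (dprefix x n') q ->
    cons (dprefix x n) q.
  by move=> n n' q h H y yin; apply: H; exact: prefix_mono h yin.
have stab : forall m, exists n1, forall n, (n1 <= n)%N -> forall q, (q < m)%N ->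
    cons (dprefix x n) q -> forall n', cons (dprefix x n') q.
  elim=> [|m [n1 H]]; first by exists 0%N.
  case: (pselect (forall n', cons (dprefix x n') m)) => hm.
    exists n1 => n hn q; rewrite ltnS leq_eqVlt => /orP[/eqP -> _|hq]; [exact: hm|exact: H].
  have [n0 hn0] : exists n0, ~ cons (dprefix x n0) m.
    by apply: contrapT => hc; apply: hm => n'; apply: contrapT => hn'; apply: hc; exists n'.
  exists (maxn n1 n0) => n hn q; rewrite ltnS leq_eqVlt => /orP[/eqP -> hc|hq].
    by exfalso; apply: hn0; apply: cons_mono hc; apply: leq_trans hn; exact: leq_maxr.
  by apply: H => //; apply: leq_trans hn; exact: leq_maxl.
have [n1 Hn1] := stab z.
have Mz : forall q, (q < z)%N -> (forall n', cons (dprefix x n') q) -> M z `<=` M q.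
  move=> q qz Hq y [fy zy]; rewrite az fk in fy.
  have Khy : Kh y.
    apply: contrapT => nKh; have := hb1 y (conj fy nKh).
    by rewrite ltnNge (leq_trans b1z zy).
  have [i xi] := allapp y Khy.
  have qy : (q <= y)%N by apply: ltnW; exact: leq_trans qz zy.
  split => //; apply: (Hq i.+1) => //; rewrite -xi.
  by rewrite -(nth_prefix x (ltnSn i)) mem_nth // prefix_size.
have MzK : M z `<=` K by move=> y [fy _]; rewrite -fk -az.
have good : forall n, (maxn n1 z <= n)%N -> forall p, Pmax (dprefix x n) p -> M p `<=` K.
  move=> n hn p [pn [cp cpM] Hp].
  have critz : crit (dprefix x n) z.
    split => // q qz hq; apply: Mz => //; apply: (Hn1 n) => //.
    by apply: leq_trans hn; exact: leq_maxl.
  have zn : (z <= size (dprefix x n))%N.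
    by rewrite prefix_size; apply: leq_trans hn; exact: leq_maxr.
  have zp := Hp z zn critz.
  move: zp; rewrite leq_eqVlt => /orP[/eqP <- //|zp].
  move=> y /(cpM z zp (consz n)); exact: MzK.
split.
  exists (maxn n1 z) => n hn y [p [Pp [Mp _]]]; exact: good n hn p Pp y Mp.
apply: limn_einf_ge; exists (maxn n1 z) => n hn.
have hn' : (maxn n1 z <= n.+1)%N by exact: leqW.
set s := dprefix x n.+1.
have critz : crit s z.
  split; first exact: consz.
  move=> q qz hq; apply: (Mz q qz); apply: (Hn1 n.+1) => //.
  by apply: leq_trans hn'; exact: leq_maxl.
have zn : (z <= size s)%N.
  by rewrite prefix_size; apply: leq_trans hn'; exact: leq_maxr.
have [p [zp pn cp Hp]] := exists_max critz zn.
have Pp : Pmax s p by split.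
have MpK := good _ hn' p Pp.
apply: (@le_trans _ _ (@mu_low R (f (aidx p)) K)).
  apply: hcond => //; apply: (@bounded_finite _ p) => y [fy nK].
  by rewrite ltnNge; apply/negP => py; apply: nK; apply: MpK.
apply: (@mu_low_fin R _ _ _ (maxn p (\max_(z <- s) z).+1) (hlang LcK)).
move=> y hy fy; exists p; split => //; split.
  by split => //; apply: leq_trans hy; exact: leq_maxl.
by apply: notin_big; apply: leq_trans hy; exact: leq_maxr.
Qed.

End Generator.

Theorem theorem6p5 (R : realType) (c : R) (Lc : set (set nat))
  (hc : 0 < c) (hcount : countable Lc)
  (hlang : forall L, Lc L -> infinite_set L) :
  generable_low_density_noisy c Lc <->
  (forall L L', Lc L -> Lc L' -> finite_set (L `\` L') ->
     (c%:E <= @mu_low R L L')%E).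
Proof.
split.
  move=> [G [sg HG]] L L' LcL LcL' fin.
  have hGL : forall x, noisy_enum L x ->
      exists N, forall n, (N <= n)%N -> G (dprefix x n) `<=` L.
    by move=> x nx; case: (HG L LcL x nx).
  have infL := hlang L LcL; have infL' := hlang L' LcL'.
  have [_ hlim] := HG L' LcL' _ (xadv_noisy G infL infL' fin).
  apply: le_trans hlim _; apply: limn_einf_le => N.
  have [n [Nn sub]] := xadv_often infL infL' fin hGL N.
  exists n; split => //.
  by apply: (@mu_low_fin R _ _ _ 0%N infL') => y _ /sub.
move=> hcond.
case: (pselect (exists L, Lc L)) => [[L0 LcL0]|nL]; last first.
  exists (fun _ => set0); split; first by move=> s y.
  by move=> K LcK; exfalso; apply: nL; exists K.
have [g ginj] := @countable_injP _ Lc hcount.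
pose f n := xget L0 [set L | Lc L /\ g L = n].
have hf : forall i, Lc (f i).
  move=> i; rewrite /f.
  case: (pselect (exists L, Lc L /\ g L = i)) => [ex|nex].
    by have := xgetPex L0 ex => -[].
  by rewrite xgetPN // => L hL; apply: nex; exists L.
have hsurj : forall K, Lc K -> exists k, f k = K.
  move=> K LcK; exists (g K); rewrite /f.
  have ex : exists L, Lc L /\ g L = g K by exists K.
  have [LcX gX] := xgetPex L0 ex.
  by apply: ginj => //; rewrite inE.
exists (Gen f); split; first exact: Gen_gen.
move=> K LcK x nx.
exact: (Gen_ok hf hsurj hlang hcond LcK nx).
Qed.
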